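(* Let $G$ be a gap sequence of genus $g$ with associated partition $\lambda$, and $0\le k\le g-1$. Then (i) $a^{(k)}_1>\dots>a^{(k)}_{m_k}\ge1$; (ii) each $a^{(k)}_i$ belongs to $G$; (iii) $\sum_{i=1}^{m_k}a^{(k)}_i=N_{\lambda,k}$.
   Context: A gap sequence of genus $g\ge1$ is a set $G\subset\mathbb Z_{\ge0}$ with $\#G=g$ whose complement $G^c$ contains $0$ and is closed under addition; $G=\{w_1<\dots<w_g\}$, $G^c=\{0=w_1^*<w_2^*<\cdots\}$, $\lambda=(w_g,\dots,w_1)-(g-1,\dots,1,0)$. $m_k=\#\{i:w_i^*<g-k\}$, $a^{(k)}_j=w_{g-k-j+1}-w_j^*$ for $1\le j\le m_k$. $N_{\lambda,k}=\lambda_{k+1}+\dots+\lambda_g$. *)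

(* Defs.v *)
From mathcomp Require Import all_boot all_order all_algebra.
Set Implicit Arguments. Unset Strict Implicit. Unset Printing Implicit Defensive.
Import GRing.Theory Num.Theory.

(* A finite set G of naturals is represented by a duplicate-free list. *)
Definition is_gap_sequence (G : seq nat) : Prop :=
  uniq G /\ 0 \notin G /\
  (forall x y : nat, x \notin G -> y \notin G -> x + y \notin G).

Definition genus (G : seq nat) : nat := size G.

(* w_i, 1-indexed: i-th smallest gap *)
Definition gapw (G : seq nat) (i : nat) : nat := nth 0 (sort leq G) i.-1.

(* w*_i, 1-indexed: i-th smallest element of the complement of G.
   All numbers > sumn G are non-gaps, so the list below contains at least
   i elements of the complement, namely its i smallest ones. *)
Definition gapwstar (G : seq nat) (i : nat) : nat :=
  nth 0 [seq x <- iota 0 (sumn G + i.+1) | x \notin G] i.-1.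

Definition gaplambda (G : seq nat) (i : nat) : nat :=
  gapw G (genus G - i + 1) - (genus G - i).

(* m_k = #{ i : w*_i < g - k } = number of non-gaps below g - k *)
Definition gapm (G : seq nat) (k : nat) : nat :=
  count (fun x => x \notin G) (iota 0 (genus G - k)).

Definition gapa (G : seq nat) (k j : nat) : int :=
  (gapw G (genus G - k - j + 1))%:Z - (gapwstar G j)%:Z.

Definition gapN (G : seq nat) (k : nat) : nat :=
  \sum_(k.+1 <= i < (genus G).+1) gaplambda G i.

(* Main.v *)
Require Import Defs.
From mathcomp Require Import all_boot all_order all_algebra.
From mathcomp Require Import zify.
Import GRing.Theory Num.Theory.

Lemma S_split (G : seq nat) n : uniq G ->
  sort leq G = [seq x <- iota 0 n | x \in G] ++ sort leq [seq x <- G | ~~ (x < n)].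
Proof.
move=> uG.
set L1 := [seq x <- iota 0 n | x \in G].
set S2 := sort leq [seq x <- G | ~~ (x < n)%N].
have sL1 : sorted leq L1.
  have := ltn_sorted_uniq_leq L1.
  by rewrite (sorted_filter ltn_trans _ (iota_ltn_sorted 0 n)) => /esym/andP[_ ->].
have sS2 : sorted leq S2 by apply: sort_sorted; exact: leq_total.
have scat : sorted leq (L1 ++ S2).
  rewrite sorted_pairwise; last exact: leq_trans.
  rewrite pairwise_cat -!sorted_pairwise; try exact: leq_trans.
  rewrite sL1 sS2 !andbT; apply/allrelP => x y.
  rewrite mem_filter mem_iota mem_sort mem_filter => /andP[_ /andP[_ hx]] /andP[hy _].
  lia.
have pG : perm_eq G (L1 ++ S2).
  apply: (@perm_trans _ ([seq x <- G | x < n] ++ [seq x <- G | predC (fun x => x < n) x])).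
    by rewrite perm_sym perm_filterC.
  apply: perm_cat.
    apply: uniq_perm; first exact: filter_uniq.
      by apply: filter_uniq; exact: iota_uniq.
    move=> x; rewrite !mem_filter mem_iota /=.
    by case: (x \in G); rewrite ?andbF ?andbT.
  by rewrite perm_sym perm_sort.
rewrite -(sorted_sort leq_trans scat); apply/perm_sortP => //.
- exact: leq_total.
- exact: leq_trans.
- exact: anti_leq.
Qed.

Lemma sumn_ge_size (s : seq nat) : 0 \notin s -> size s <= sumn s.
Proof.
elim: s => //= x s IH; rewrite in_cons negb_or => /andP[hx hs].
have := IH hs; have : x != 0 by rewrite eq_sym. lia.
Qed.

Lemma nth_ge (s : seq nat) i : sorted ltn s -> i < size s -> i <= nth 0 s i.
Proof.
move=> ss; elim: i => // i IH hi.
have h := sorted_ltn_nth ltn_trans 0 ss.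
have : nth 0 s i < nth 0 s i.+1 by apply: h; rewrite ?inE //; lia.
have := IH (ltnW hi). lia.
Qed.

Ltac slia W L1 S2 :=
  repeat match goal with H : ?P |- _ =>
    match type of P with Prop => revert H end end;
  try (set sw := size W); try (set sl := size L1);
  try (set s2 := size (L1 ++ S2)); try (set s3 := size S2); intros; lia.

Local Open Scope ring_scope.

Theorem lemma2p1 (G : seq nat) (k : nat) :
  is_gap_sequence G -> (1 <= genus G)%N -> (k <= genus G - 1)%N ->
  [/\ (forall i : nat, (1 <= i)%N -> (i < gapm G k)%N -> gapa G k i.+1 < gapa G k i),
      ((0 < gapm G k)%N -> 1 <= gapa G k (gapm G k)),
      (forall i : nat, (1 <= i <= gapm G k)%N -> gapa G k i \in [seq (x%:Z) | x <- G]) &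
      \sum_(1 <= i < (gapm G k).+1) gapa G k i = (gapN G k)%:Z].
Proof.
move=> [uG [G0 Gadd]] g1 kg.
have gE : genus G = size G by [].
set n := (genus G - k)%N.
set W := [seq x <- iota 0 n | x \notin G].
set L1 := [seq x <- iota 0 n | x \in G].
set S2 := sort leq [seq x <- G | ~~ (x < n)%N].
have Ssp : sort leq G = L1 ++ S2 := S_split G n uG.
have hm : gapm G k = size W by rewrite /gapm size_filter.
have hcm : (size L1 + size W)%N = n.
  rewrite !size_filter.
  have := count_predC (fun x => x \in G) (iota 0 n); rewrite size_iota; exact.
have hSsz : size (L1 ++ S2) = size G by rewrite -Ssp size_sort.
have hng : (1 <= n <= size G)%N by rewrite /n; lia.
have hS2 : forall y, y \in S2 -> (n <= y)%N.
  by move=> y; rewrite mem_sort mem_filter -leqNgt => /andP[].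
have hW : forall y, y \in W -> (y < n)%N /\ y \notin G.
  by move=> y; rewrite mem_filter mem_iota => /andP[-> /andP[_ ->]].
have Sltn : sorted ltn (L1 ++ S2).
  rewrite -Ssp ltn_sorted_uniq_leq sort_uniq uG sort_sorted //; exact: leq_total.
have Wltn : sorted ltn W := sorted_filter ltn_trans _ (iota_ltn_sorted 0 n).
have hw : forall j, (1 <= j <= size W)%N ->
    gapw G (genus G - k - j + 1) = nth 0%N (L1 ++ S2) (n - j).
  move=> j hj; rewrite /gapw Ssp; congr nth; rewrite /n; slia W L1 S2.
have hws : forall j, (1 <= j <= size W)%N -> gapwstar G j = nth 0%N W j.-1.
  move=> j hj; rewrite /gapwstar.
  have hs := sumn_ge_size G G0.
  have -> : (sumn G + j.+1 = n + (sumn G + j.+1 - n))%N by slia W L1 S2.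
  rewrite iotaD filter_cat -/W nth_cat ifT // -subn1; slia W L1 S2.
have key : forall j, (1 <= j <= size W)%N ->
    (n <= nth 0%N (L1 ++ S2) (n - j))%N /\ nth 0%N (L1 ++ S2) (n - j) \in G.
  move=> j hj; split.
    rewrite nth_cat ifF; last by apply/negbTE; rewrite -leqNgt; slia W L1 S2.
    apply: hS2; apply: mem_nth.
    have : size S2 = (size G - size L1)%N by rewrite -hSsz size_cat; slia W L1 S2.
    slia W L1 S2.
  by rewrite -(mem_sort leq) Ssp; apply: mem_nth; rewrite hSsz; slia W L1 S2.
have Wj : forall j, (1 <= j <= size W)%N -> nth 0%N W j.-1 \in W.
  by move=> j hj; apply: mem_nth; slia W L1 S2.
rewrite hm; split.
- move=> i i1 im.
  have e1 := hw i.+1 ltac:(slia W L1 S2).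
  have e2 := hw i ltac:(slia W L1 S2).
  have e3 := hws i.+1 ltac:(slia W L1 S2).
  have e4 := hws i ltac:(slia W L1 S2).
  rewrite /gapa e1 e2 e3 e4.
  have h1 : (nth 0%N (L1 ++ S2) (n - i.+1) < nth 0%N (L1 ++ S2) (n - i))%N.
    apply: (sorted_ltn_nth ltn_trans 0 Sltn); rewrite ?inE; slia W L1 S2.
  have h2 : (nth 0%N W i.-1 < nth 0%N W i.+1.-1)%N.
    apply: (sorted_ltn_nth ltn_trans 0 Wltn); rewrite ?inE; slia W L1 S2.
  slia W L1 S2.
- move=> m0; rewrite /gapa hw ?hws; try slia W L1 S2.
  have [h1 _] := key (size W) ltac:(slia W L1 S2).
  have [h2 _] := hW _ (Wj (size W) ltac:(slia W L1 S2)).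
  slia W L1 S2.
- move=> i hi; rewrite /gapa hw ?hws //.
  have [h1 xG] := key i hi.
  have [h2 yG] := hW _ (Wj i hi).
  rewrite subzn; last slia W L1 S2.
  apply: map_f; apply: contraT => h.
  have := Gadd _ _ h yG; rewrite subnK ?xG //; slia W L1 S2.
have Sfold : forall i, (1 <= i < (size W).+1)%N ->
    gapa G k i = (nth 0%N (L1 ++ S2) (n - i))%:Z - (nth 0%N W i.-1)%:Z.
  by move=> i hi; rewrite /gapa hw ?hws //; slia W L1 S2.
rewrite (eq_big_nat _ _ Sfold) sumrB.
have castsum : forall F : nat -> nat,
    \sum_(1 <= i < (size W).+1) (F i)%:Z = (\sum_(1 <= i < (size W).+1) F i)%N%:Z.
  move=> F; apply: (big_rec2 (fun x (y : nat) => x = Posz y)) => // i a b _ ->.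
  by rewrite PoszD.
rewrite !castsum.
set A := (\sum_(1 <= i < (size W).+1) nth 0%N (L1 ++ S2) (n - i))%N.
set B := (\sum_(1 <= i < (size W).+1) nth 0%N W i.-1)%N.
suff : A = (gapN G k + B)%N by move=> ->; rewrite PoszD addrK.
have hB : B = sumn W.
  by rewrite /B big_add1 /= sumnE [RHS](big_nth 0).
have hA : A = (\sum_((size L1) <= i < n) nth 0%N (L1 ++ S2) i)%N.
  rewrite /A big_add1 /= big_nat_rev /= -{1}(add0n (size L1)) big_addn.
  have -> : (n - (size L1) = size W)%N by slia W L1 S2.
  apply: eq_big_nat => i hi; congr nth; slia W L1 S2.
have hN : gapN G k = (\sum_(0 <= i < n) (nth 0%N (L1 ++ S2) i - i))%N.
  rewrite /gapN big_add1 /= big_nat_rev /= -{1}(add0n k) big_addn.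
  rewrite -/n; apply: eq_big_nat => i hi.
  rewrite /gaplambda /gapw Ssp.
  have e1 : (genus G - (k + genus G - (i + k).+1).+1 + 1)%N.-1 = i by slia W L1 S2.
  have e2 : (genus G - (k + genus G - (i + k).+1).+1)%N = i by slia W L1 S2.
  by rewrite e1 e2.
have hN2 : (gapN G k + \sum_(0 <= i < n) i)%N = (\sum_(0 <= i < n) nth 0%N (L1 ++ S2) i)%N.
  rewrite hN -big_split; apply: eq_big_nat => i hi /=.
  rewrite subnK //; apply: nth_ge => //; slia W L1 S2.
have hsplit : (\sum_(0 <= i < n) nth 0%N (L1 ++ S2) i)%N
    = (sumn L1 + \sum_((size L1) <= i < n) nth 0%N (L1 ++ S2) i)%N.
  rewrite (big_cat_nat _ (n := (size L1))) //=; last slia W L1 S2.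
  congr addn; rewrite sumnE [RHS](big_nth 0); apply: eq_big_nat => i hi.
  by rewrite nth_cat ifT //; slia W L1 S2.
have hiota : (sumn L1 + sumn W)%N = (\sum_(0 <= i < n) i)%N.
  rewrite -sumn_cat (perm_sumn (introT permPl (perm_filterC (fun x => x \in G) (iota 0 n)))).
  by rewrite sumnE /index_iota subn0.
rewrite hA hB; move: hN2; rewrite hsplit -hiota; lia.
Qed.
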